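(* Let $(X,Y)\sim P_{X,Y}$ be random variables in $\{0,1\}\times\mathcal{Y}$, $\mathcal{Y}=\{1,\dots,|\mathcal{Y}|\}$ with $|\mathcal{Y}|\geq 3$, let $p_y=\mathbb{P}(X=0|Y=y)$ and assume $p_1\le\cdots\le p_{|\mathcal{Y}|}$. For $i\in\{2,\dots,|\mathcal{Y}|-1\}$ let $\alpha_i\in[0,1]$ satisfy $\alpha_ip_{i-1}+(1-\alpha_i)p_{i+1}=p_i$ and define $P^i_{Y,Z,X}=P_YP^i_{Z|Y}P^i_{X|Z}$ on $\mathcal{Y}\times(\mathcal{Y}\setminus\{i\})\times\{0,1\}$ by $P^i_{Z|Y}(z|y)=1$ if $y\neq i,z=y$; $=\alpha_i$ if $y=i,z=i-1$; $=1-\alpha_i$ if $y=i,z=i+1$; $=0$ otherwise; and $P^i_{X|Z}(0|z)=p_z$. Then there exists $i\in\{2,\dots,|\mathcal{Y}|-1\}$ such that under $P^i_{Y,Z,X}$, \[ I(X;Z)-I(X;Y)\leq\frac{256}{|\mathcal{Y}|^3}. \]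
   Context: Logarithms (and mutual informations) are natural. *)

(* Defs.v *)
From mathcomp Require Import all_boot all_order all_algebra.
From mathcomp Require Import all_classical all_reals all_analysis.
Set Implicit Arguments. Unset Strict Implicit. Unset Printing Implicit Defensive.
Import Order.TTheory GRing.Theory Num.Theory.
Local Open Scope ring_scope.

Section Defs.
Variable R : realType.

Definition mutinfo (A B : finType) (P : A -> B -> R) : R :=
  \sum_(a : A) \sum_(b : B)
     (if P a b == 0 then 0
      else P a b * ln (P a b / ((\sum_(b' : B) P a b') * (\sum_(a' : A) P a' b)))).

Variable n : nat.

(* value of f : 'I_n -> R at a natural index k (0 if k >= n) *)
Definition at_nat (f : 'I_n -> R) (k : nat) : R :=
  match @insub nat (fun k => k < n)%N 'I_n k with Some j => f j | None => 0 end.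

(* P_{X|Y}(x|y) with X = 0 <-> x = false, p y = P(X=0|Y=y) *)
Definition PXgiven (p : 'I_n -> R) (y : 'I_n) (x : bool) : R :=
  if x then 1 - p y else p y.

Definition PXY (PY p : 'I_n -> R) (x : bool) (y : 'I_n) : R :=
  PY y * PXgiven p y x.

(* the channel P^i_{Z|Y} (Z takes values in 'I_n; z = i has zero mass) *)
Definition PZgY (alpha : 'I_n -> R) (i : 'I_n) (y z : 'I_n) : R :=
  if y != i then (z == y)%:R
  else if nat_of_ord z == (nat_of_ord i).-1 then alpha i
  else if nat_of_ord z == (nat_of_ord i).+1 then 1 - alpha i
  else 0.

Definition PXZ (PY p alpha : 'I_n -> R) (i : 'I_n) (x : bool) (z : 'I_n) : R :=
  \sum_(y : 'I_n) PY y * PZgY alpha i y z * PXgiven p z x.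

End Defs.

(* Main.v *)
Require Import Defs.
From mathcomp Require Import all_boot all_order all_algebra.
From mathcomp Require Import all_classical all_reals all_analysis.
From mathcomp Require Import ring lra zify.
Import Order.TTheory GRing.Theory Num.Theory.
Local Open Scope ring_scope.


Section Ana.
Context {R : realType}.

Definition gg (x : R) := x * ln x.
Definition GG (x : R) := gg x + gg (1 - x).
Definition psi (x : R) := Num.sqrt x - Num.sqrt (1 - x).

Lemma ln_le_sub1 (x : R) : 0 < x -> ln x <= x - 1.
Proof.
move=> x0; have := expR_ge1Dx (ln x); rewrite lnK ?posrE //; lra.
Qed.

Lemma gg0 : gg 0 = 0. Proof. by rewrite /gg mul0r. Qed.

Lemma D_bound (b x : R) : 0 < b -> 0 <= x ->
  gg x - gg b - (ln b + 1) * (x - b) <=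
  (Num.sqrt x - Num.sqrt b) ^+ 2 * (2 * Num.sqrt x + Num.sqrt b) / Num.sqrt b.
Proof.
move=> b0 x0.
have r0 : 0 < Num.sqrt b by rewrite sqrtr_gt0.
have t0 : 0 <= Num.sqrt x by apply: sqrtr_ge0.
have hb : b = Num.sqrt b ^+ 2 by rewrite sqr_sqrtr // ltW.
have hx : x = Num.sqrt x ^+ 2 by rewrite sqr_sqrtr.
move: r0 t0 hb hx; set r := Num.sqrt b; set t := Num.sqrt x => r0 t0 hb hx.
have rn0 : r != 0 by rewrite gt_eqF.
rewrite /gg.
have [x00|xpos] := eqVneq x 0.
  have -> : t = 0 by rewrite /t x00 sqrtr0.
  have -> : (0 - r) ^+ 2 * (2 * 0 + r) / r = b by rewrite hb; field.
  rewrite x00.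
  have -> : 0 * ln 0 - b * ln b - (ln b + 1) * (0 - b) = b by ring.
  done.
have tpos : 0 < t by rewrite lt_def t0 andbT /t sqrtr_eq0 -ltNge lt_def xpos.
have lx : ln x = ln t *+ 2 by rewrite hx lnXn.
have lb : ln b = ln r *+ 2 by rewrite hb lnXn.
have H : ln t - ln r <= t / r - 1.
  rewrite -ln_div ?posrE //; apply: ln_le_sub1; exact: divr_gt0.
rewrite lx lb.
apply: (le_trans (y := 2 * x * (t / r - 1) - x + b)).
  have -> : x * (ln t *+ 2) - b * (ln r *+ 2) - (ln r *+ 2 + 1) * (x - b)
     = 2 * x * (ln t - ln r) - x + b by rewrite !mulr2n; ring.
  rewrite lerD2r lerD2r ler_wpM2l //; lra.
suff -> : (t - r) ^+ 2 * (2 * t + r) / r = 2 * x * (t / r - 1) - x + b by [].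
by rewrite hx hb; field.
Qed.


Lemma le_of_eq (x y : R) : x = y -> x <= y.
Proof. by move->. Qed.

Lemma poly_ineq (s r t : R) : 0 <= s -> s <= r -> r <= t -> 0 < r ->
  (t - r) * (t + r) * (r - s) ^+ 2 * (2 * s + r) +
  (r - s) * (r + s) * (t - r) ^+ 2 * (2 * t + r)
  <= 3 / 2 * (t - s) ^+ 3 * (t + s) * r.
Proof.
move=> s0 sr rt r0.
have A0 : 0 <= r - s by lra.
have B0 : 0 <= t - r by lra.
have h1 : (t + r) * (2 * s + r) <= (2 * (t + s)) * (3 * r).
  apply: ler_pM; lra.
have h2 : (r + s) * (2 * t + r) <= (2 * r) * (3 * (t + s)).
  apply: ler_pM; lra.
have E : (t - r) * (t + r) * (r - s) ^+ 2 * (2 * s + r) +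
  (r - s) * (r + s) * (t - r) ^+ 2 * (2 * t + r) =
  ((r - s) * (t - r)) * ((r - s) * ((t + r) * (2 * s + r)) + (t - r) * ((r + s) * (2 * t + r))) by ring.
rewrite E.
have h3 : (r - s) * ((t + r) * (2 * s + r)) + (t - r) * ((r + s) * (2 * t + r))
   <= (t - s) * (6 * r * (t + s)).
  apply: (le_trans (y := (r - s) * (2 * (t + s) * (3 * r)) + (t - r) * (2 * r * (3 * (t + s))))).
    by apply: lerD; apply: ler_wpM2l.
  by apply: le_of_eq; ring.
have h4 : (r - s) * (t - r) <= (t - s) ^+ 2 / 4.
  have : 0 <= ((r - s) - (t - r)) ^+ 2 by apply: sqr_ge0.
  move=> h; have -> : (t - s) ^+ 2 / 4 = (r - s) * (t - r) + ((r - s) - (t - r)) ^+ 2 / 4 by field.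
  rewrite lerDl; apply: divr_ge0 => //.
apply: (le_trans (y := (t - s) ^+ 2 / 4 * ((t - s) * (6 * r * (t + s))))).
  apply: ler_pM => //; first exact: mulr_ge0.
  apply: addr_ge0; apply: mulr_ge0 => //; apply: mulr_ge0; lra.
by apply: le_of_eq; field.
Qed.

Lemma Lg (a b c be : R) : 0 <= a -> a <= b -> b <= c -> 0 <= be <= 1 ->
  b = be * a + (1 - be) * c ->
  be * gg a + (1 - be) * gg c - gg b <= 3 / 2 * (Num.sqrt c - Num.sqrt a) ^+ 2.
Proof.
move=> a0 ab bc /andP[be0 be1] hb.
have rhs0 : 0 <= 3 / 2 * (Num.sqrt c - Num.sqrt a) ^+ 2 by apply: mulr_ge0 => //; apply: sqr_ge0.
have [b0|bpos] := leP b 0.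
  have a00 : a = 0 by lra.
  have b00 : b = 0 by lra.
  have c00 : (1 - be) * c = 0 by move: hb; rewrite a00 b00 mulr0 add0r => <-.
  rewrite a00 b00 gg0 /gg mulrA c00 mul0r mulr0 !addr0 subr0.
  by move: rhs0; rewrite a00.
have ha : Num.sqrt a ^+ 2 = a by rewrite sqr_sqrtr.
have hb' : Num.sqrt b ^+ 2 = b by rewrite sqr_sqrtr // ltW.
have hc : Num.sqrt c ^+ 2 = c by rewrite sqr_sqrtr // (le_trans a0 (le_trans ab bc)).
have sr : Num.sqrt a <= Num.sqrt b by rewrite ler_sqrt // ltW.
have rt : Num.sqrt b <= Num.sqrt c by rewrite ler_sqrt // (le_trans (ltW bpos)).
have s0 : 0 <= Num.sqrt a by apply: sqrtr_ge0.
have r0 : 0 < Num.sqrt b by rewrite sqrtr_gt0.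
have Da := @D_bound b a bpos a0.
have Dc := @D_bound b c bpos (le_trans a0 (le_trans ab bc)).
move: ha hb' hc sr rt s0 r0 Da Dc.
set s := Num.sqrt a; set r := Num.sqrt b; set t := Num.sqrt c.
move=> ha hb' hc sr rt s0 r0 Da Dc.
have [ts|ts] := eqVneq t s.
  have ca : c = a by rewrite -hc -ha ts.
  have ba : b = a by rewrite hb ca; ring.
  rewrite ca ba.
  have -> : be * gg a + (1 - be) * gg a - gg a = 0 by ring.
  exact: rhs0.
have stl : s < t by rewrite lt_def ts (le_trans sr rt).
have key : be * (t ^+ 2 - s ^+ 2) = t ^+ 2 - r ^+ 2 by rewrite ha hb' hc hb; ring.
have key2 : (1 - be) * (t ^+ 2 - s ^+ 2) = r ^+ 2 - s ^+ 2 by rewrite ha hb' hc hb; ring.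
have tspos : 0 < t ^+ 2 - s ^+ 2.
  have -> : t ^+ 2 - s ^+ 2 = (t - s) * (t + s) by ring.
  apply: mulr_gt0; lra.
have E : be * gg a + (1 - be) * gg c - gg b =
  be * (gg a - gg b - (ln b + 1) * (a - b)) + (1 - be) * (gg c - gg b - (ln b + 1) * (c - b))
  + (ln b + 1) * (be * a + (1 - be) * c - b) by ring.
rewrite E -hb subrr mulr0 addr0.
apply: (le_trans (y := be * ((s - r) ^+ 2 * (2 * s + r) / r) + (1 - be) * ((t - r) ^+ 2 * (2 * t + r) / r))).
  by apply: lerD; apply: ler_wpM2l => //; lra.
have E2 : be * ((s - r) ^+ 2 * (2 * s + r) / r) + (1 - be) * ((t - r) ^+ 2 * (2 * t + r) / r)
  = ((be * (t ^+ 2 - s ^+ 2)) * (r - s) ^+ 2 * (2 * s + r) + ((1 - be) * (t ^+ 2 - s ^+ 2)) * (t - r) ^+ 2 * (2 * t + r)) / ((t ^+ 2 - s ^+ 2) * r).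
  by field; apply/andP; split; rewrite gt_eqF.
rewrite E2 key key2 ler_pdivrMr; last exact: mulr_gt0.
have -> : 3 / 2 * (t - s) ^+ 2 * ((t ^+ 2 - s ^+ 2) * r) = 3 / 2 * (t - s) ^+ 3 * (t + s) * r by ring.
have -> : (t ^+ 2 - r ^+ 2) = (t - r) * (t + r) by ring.
have -> : (r ^+ 2 - s ^+ 2) = (r - s) * (r + s) by ring.
exact: poly_ineq.
Qed.

Lemma Jbound (a b c al : R) : 0 <= a -> a <= b -> b <= c -> c <= 1 -> 0 <= al <= 1 ->
  b = al * a + (1 - al) * c ->
  al * GG a + (1 - al) * GG c - GG b <= 3 / 2 * (psi c - psi a) ^+ 2.
Proof.
move=> a0 ab bc c1 /andP[al0 al1] hb.
have h1 := @Lg a b c al a0 ab bc (introT andP (conj al0 al1)) hb.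
have al' : 0 <= 1 - al <= 1 by apply/andP; split; lra.
have h2 : (1 - al) * gg (1 - c) + (1 - (1 - al)) * gg (1 - a) - gg (1 - b)
   <= 3 / 2 * (Num.sqrt (1 - a) - Num.sqrt (1 - c)) ^+ 2.
  apply: Lg => //; try lra.
  all: try (rewrite hb; ring).
have X0 : 0 <= Num.sqrt c - Num.sqrt a.
  by rewrite subr_ge0 ler_sqrt //; lra.
have Y0 : 0 <= Num.sqrt (1 - a) - Num.sqrt (1 - c).
  by rewrite subr_ge0 ler_sqrt //; lra.
have -> : psi c - psi a = (Num.sqrt c - Num.sqrt a) + (Num.sqrt (1 - a) - Num.sqrt (1 - c)).
  by rewrite /psi; ring.
move: X0 Y0 h1 h2.
set X := Num.sqrt c - Num.sqrt a; set Y := Num.sqrt (1 - a) - Num.sqrt (1 - c).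
move=> X0 Y0 h1 h2.
have -> : al * GG a + (1 - al) * GG c - GG b =
  (al * gg a + (1 - al) * gg c - gg b) +
  ((1 - al) * gg (1 - c) + (1 - (1 - al)) * gg (1 - a) - gg (1 - b)) by rewrite /GG; ring.
apply: (le_trans (lerD h1 h2)).
have -> : 3 / 2 * (X + Y) ^+ 2 = 3 / 2 * X ^+ 2 + 3 / 2 * Y ^+ 2 + 3 * (X * Y) by field.
rewrite lerDl; apply: mulr_ge0 => //; exact: mulr_ge0.
Qed.

Lemma gg_le0 (x : R) : 0 <= x -> x <= 1 -> gg x <= 0.
Proof. by move=> x0 x1; rewrite /gg mulr_ge0_le0 // ln_le0. Qed.

Lemma ngg (x : R) : 0 <= x -> x <= 1 -> - gg x <= 1 - x.
Proof.
move=> x0 x1; have [->|xp] := eqVneq x 0; first by rewrite gg0; lra.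
have xpos : 0 < x by rewrite lt_def xp x0.
have h : ln x^-1 <= x^-1 - 1 by apply: ln_le_sub1; rewrite invr_gt0.
rewrite lnV ?posrE // in h.
have : x * (- ln x) <= x * (x^-1 - 1) by rewrite ler_wpM2l.
rewrite mulrBr mulfV ?gt_eqF // mulr1 /gg; move=> h2; rewrite -mulrN; exact: h2.
Qed.

Lemma Jtriv (a b c al : R) : 0 <= a <= 1 -> 0 <= b <= 1 -> 0 <= c <= 1 -> 0 <= al <= 1 ->
  al * GG a + (1 - al) * GG c - GG b <= 1.
Proof.
move=> /andP[a0 a1] /andP[b0 b1] /andP[c0 c1] /andP[al0 al1].
have Ga : GG a <= 0.
  have h1 := @gg_le0 a a0 a1.
  have h2 : gg (1 - a) <= 0 by apply: gg_le0; lra.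
  rewrite /GG; lra.
have Gc : GG c <= 0.
  have h1 := @gg_le0 c c0 c1.
  have h2 : gg (1 - c) <= 0 by apply: gg_le0; lra.
  rewrite /GG; lra.
have Gb : - GG b <= 1.
  have h1 := @ngg b b0 b1.
  have h2 : - gg (1 - b) <= 1 - (1 - b) by apply: ngg; lra.
  rewrite /GG; lra.
have t1 : al * GG a <= 0 by rewrite mulr_ge0_le0.
have t2 : (1 - al) * GG c <= 0 by rewrite mulr_ge0_le0 //; lra.
lra.
Qed.
End Ana.


Section B.
Variable R : realType.
Variable n : nat.

Lemma PXgiven_ge0 (p : 'I_n -> R) z x : (forall z, 0 <= p z <= 1) -> 0 <= PXgiven p z x.
Proof. by move=> h; have /andP[h0 h1] := h z; rewrite /PXgiven; case: x => //; rewrite subr_ge0. Qed.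

Lemma mutinfo_form (Q p : 'I_n -> R) : (forall z, 0 <= Q z) -> (forall z, 0 <= p z <= 1) ->
  mutinfo (fun x z => Q z * PXgiven p z x) =
  \sum_x \sum_z Q z * gg (PXgiven p z x) - \sum_x gg (\sum_z Q z * PXgiven p z x).
Proof.
move=> Q0 p01; rewrite /mutinfo -sumrB; apply: eq_bigr => x _.
rewrite {2}/gg big_distrl /= -sumrB; apply: eq_bigr => z _.
have N : \sum_(a' : bool) Q z * PXgiven p z a' = Q z by rewrite big_bool /PXgiven /=; ring.
rewrite N.
have w0 := @PXgiven_ge0 p z x p01.
move: w0; set w := PXgiven p z x; set M := \sum_(b' : 'I_n) _ => w0.
case: eqP => [P0|P0].
  by rewrite /gg mulrA P0 !mul0r subr0.
have Qn0 : Q z != 0 by apply/eqP => h; apply: P0; rewrite h mul0r.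
have wn0 : w != 0 by apply/eqP => h; apply: P0; rewrite h mulr0.
have Qpos : 0 < Q z by rewrite lt_def Qn0 Q0.
have wpos : 0 < w by rewrite lt_def wn0 w0.
have Mge : Q z * w <= M.
  rewrite /M (bigD1 z) //= lerDl; apply: sumr_ge0 => i _; apply: mulr_ge0 => //; exact: PXgiven_ge0.
have Mpos : 0 < M by apply: lt_le_trans Mge; apply: mulr_gt0.
have -> : Q z * w / (M * Q z) = w / M by field; apply/andP; split; rewrite gt_eqF.
rewrite ln_div ?posrE // /gg; ring.
Qed.


Lemma chan (alpha : 'I_n -> R) (i i1 i2 : 'I_n) : val i1 = i.-1 -> val i2 = i.+1 ->
  (0 < i)%N -> forall y (F : 'I_n -> R),
  \sum_z PZgY alpha i y z * F z =
  if y != i then F y else alpha i * F i1 + (1 - alpha i) * F i2.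
Proof.
move=> h1 h2 i0 y F.
have [->|ne] := eqVneq y i.
  have E : forall z, PZgY alpha i i z = if nat_of_ord z == i.-1 then alpha i
       else if nat_of_ord z == i.+1 then 1 - alpha i else 0 by move=> z; rewrite /PZgY eqxx.
  under eq_bigr do rewrite E.
  rewrite /=.
  have ne12 : i2 != i1.
    apply/eqP => e; have := congr1 val e; rewrite h1 h2; lia.
  rewrite (bigD1 i1) // (bigD1 i2) /=; last by rewrite ne12.

  rewrite h1 eqxx h2 /=.
  have -> : (i.+1 == i.-1)%N = false by apply/eqP; lia.
  rewrite eqxx big1 ?addr0 // => z; rewrite ?andTb => /andP[zi1 zi2].
  have -> : (nat_of_ord z == i.-1) = false.
    apply/negbTE; apply: contra zi1 => /eqP e; by apply/eqP/val_inj; rewrite /= e h1.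
  have -> : (nat_of_ord z == i.+1) = false.
    apply/negbTE; apply: contra zi2 => /eqP e; by apply/eqP/val_inj; rewrite /= e h2.
  by rewrite mul0r.
have E : forall z, PZgY alpha i y z = (z == y)%:R by move=> z; rewrite /PZgY ne.
under eq_bigr do rewrite E.
rewrite /= (bigD1 y) //= eqxx mul1r big1 ?addr0 // => z zy.
by rewrite (negbTE zy) mul0r.
Qed.

Lemma chan_sum (PY alpha : 'I_n -> R) (i i1 i2 : 'I_n) : val i1 = i.-1 -> val i2 = i.+1 ->
  (0 < i)%N -> forall (F : 'I_n -> R),
  \sum_z (\sum_y PY y * PZgY alpha i y z) * F z =
  \sum_y PY y * F y + PY i * (alpha i * F i1 + (1 - alpha i) * F i2 - F i).
Proof.
move=> h1 h2 i0 F.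
have -> : \sum_z (\sum_y PY y * PZgY alpha i y z) * F z =
          \sum_z \sum_y PY y * (PZgY alpha i y z * F z).
  by apply: eq_bigr => z _; rewrite big_distrl; apply: eq_bigr => y _; rewrite mulrA.
rewrite exchange_big /=.
have -> : \sum_y \sum_z PY y * (PZgY alpha i y z * F z) =
          \sum_y PY y * (if y != i then F y else alpha i * F i1 + (1 - alpha i) * F i2).
  by apply: eq_bigr => y _; rewrite -big_distrr /= (@chan alpha i i1 i2 h1 h2 i0).
rewrite (bigD1 i) //= eqxx /= [in RHS](bigD1 i) //=.
have -> : \sum_(y | y != i) PY y * (if y != i then F y else alpha i * F i1 + (1 - alpha i) * F i2)
   = \sum_(y | y != i) PY y * F y by apply: eq_bigr => y ->.
ring.
Qed.


Lemma diff_eq (PY p alpha : 'I_n -> R) (i i1 i2 : 'I_n) : val i1 = i.-1 -> val i2 = i.+1 ->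
  (0 < i)%N -> (forall y, 0 <= PY y) -> (forall y, 0 <= p y <= 1) ->
  0 <= alpha i <= 1 -> alpha i * p i1 + (1 - alpha i) * p i2 = p i ->
  mutinfo (PXZ PY p alpha i) - mutinfo (PXY PY p) =
  PY i * (alpha i * GG (p i1) + (1 - alpha i) * GG (p i2) - GG (p i)).
Proof.
move=> h1 h2 i0 PY0 p01 /andP[al0 al1] hrel.
set QZ := fun z => \sum_y PY y * PZgY alpha i y z.
have QZ0 : forall z, 0 <= QZ z.
  move=> z; apply: sumr_ge0 => y _; apply: mulr_ge0 => //.
  rewrite /PZgY; case: (y != i) => //; case: (_ == _) => //; case: (_ == _) => //; lra.
have E : PXZ PY p alpha i = fun x z => QZ z * PXgiven p z x.
  apply/funext => x; apply/funext => z; rewrite /PXZ /QZ big_distrl //.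
rewrite E (@mutinfo_form QZ p QZ0 p01) /PXY (@mutinfo_form PY p PY0 p01).
have M : forall x, \sum_z QZ z * PXgiven p z x = \sum_y PY y * PXgiven p y x.
  move=> x; rewrite /QZ (@chan_sum PY alpha i i1 i2 h1 h2 i0).
  suff -> : alpha i * PXgiven p i1 x + (1 - alpha i) * PXgiven p i2 x - PXgiven p i x = 0 by rewrite mulr0 addr0.
  rewrite /PXgiven -hrel; case: x => /=; ring.
have Gs : forall x, \sum_z QZ z * gg (PXgiven p z x) = \sum_y PY y * gg (PXgiven p y x) +
   PY i * (alpha i * gg (PXgiven p i1 x) + (1 - alpha i) * gg (PXgiven p i2 x) - gg (PXgiven p i x)).
  by move=> x; rewrite /QZ (@chan_sum PY alpha i i1 i2 h1 h2 i0).
rewrite (eq_bigr _ (fun x _ => Gs x)) (eq_bigr _ (fun x _ => congr1 gg (M x))) big_split /=.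
rewrite [X in _ + X - _ - _]big_bool /PXgiven /GG /=.
ring.
Qed.

End B.


Section C.
Context {R : realType}.

Lemma at_natE N (f : 'I_N -> R) k (hk : (k < N)%N) : at_nat f k = f (Ordinal hk).
Proof. by rewrite /at_nat (insubT (fun k => k < N)%N hk). Qed.

Lemma at_natP N (f : 'I_N -> R) (P : R -> Prop) k : P 0 -> (forall j, P (f j)) -> P (at_nat f k).
Proof. by move=> P0 Pf; rewrite /at_nat; case: insubP. Qed.

Lemma tele (f : nat -> R) N : (1 <= N)%N ->
  \sum_(1 <= k < N) (f k.+1 - f k.-1) = f N + f N.-1 - f 1%N - f 0%N.
Proof.
elim: N => // N IH; case: N IH => [|N] IH _.
  by rewrite big_geq //=; ring.
by rewrite big_nat_recr //= IH //=; ring.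
Qed.

Lemma psi_bound (x : R) : 0 <= x <= 1 -> -1 <= psi x <= 1.
Proof.
move=> /andP[x0 x1].
have a0 := sqrtr_ge0 x; have b0 := sqrtr_ge0 (1 - x).
have a1 : Num.sqrt x <= 1 by rewrite -sqrtr1 ler_sqrt.
have b1 : Num.sqrt (1 - x) <= 1 by rewrite -[X in _ <= X]sqrtr1 ler_sqrt //; lra.
rewrite /psi; apply/andP; split; lra.
Qed.

Lemma psi_mono (x y : R) : 0 <= x -> x <= y -> y <= 1 -> psi x <= psi y.
Proof.
move=> x0 xy y1; rewrite /psi lerB //; rewrite ler_sqrt //; lra.
Qed.


Lemma amgm (X Y : R) : 0 <= X -> 0 <= Y -> X + 2 * Y <= 3 -> X * Y ^+ 2 <= 1.
Proof.
move=> X0 Y0 h.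
apply: (le_trans (y := (3 - 2 * Y) * Y ^+ 2)).
  by apply: ler_wpM2r; [apply: sqr_ge0 | lra].
have -> : (3 - 2 * Y) * Y ^+ 2 = 1 - (Y - 1) ^+ 2 * (2 * Y + 1) by ring.
rewrite lerBlDr lerDl; apply: mulr_ge0; [apply: sqr_ge0 | lra].
Qed.

Lemma cube_ineq (m : R) : 2 <= m -> 3 * (m + 2) ^+ 3 <= 32 * m ^+ 3.
Proof.
move=> m2.
have h1 : 2 * m <= m * m by rewrite ler_wpM2r //; lra.
have h2 : 2 * (m * m) <= m * (m * m) by rewrite ler_wpM2r //; nra.
have -> : 3 * (m + 2) ^+ 3 = 3 * (m * (m * m)) + 18 * (m * m) + 36 * m + 24 by ring.
have -> : 32 * m ^+ 3 = 32 * (m * (m * m)) by ring.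
lra.
Qed.

End C.

Theorem theorem4 (R : realType) (n : nat) (PY p alpha : 'I_n -> R) :
  (3 <= n)%N ->
  (forall y, 0 <= PY y) -> \sum_(y : 'I_n) PY y = 1 ->
  (forall y, 0 <= p y <= 1) ->
  (forall a b : 'I_n, (a <= b)%N -> p a <= p b) ->
  (forall i : 'I_n, (0 < i < n.-1)%N ->
     0 <= alpha i <= 1 /\
     alpha i * at_nat p i.-1 + (1 - alpha i) * at_nat p i.+1 = p i) ->
  exists i : 'I_n, (0 < i < n.-1)%N /\
     mutinfo (PXZ PY p alpha i) - mutinfo (PXY PY p)
       <= 256 / (n%:R ^+ 3).
Proof.
move=> n3 PY0 PYsum p01 pmono hal.
have [n' hn] : exists n', n = n'.+3 by exists (n - 3)%N; lia.
subst n.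
set m : R := (n'.+1)%:R.
have mpos : 0 < m by rewrite ltr0n.
pose Pn k := at_nat p k.
pose Qn k := at_nat PY k.
pose u k := psi (Pn k.+1) - psi (Pn k.-1).
have Pn01 : forall k, 0 <= Pn k <= 1.
  by move=> k; apply: (@at_natP R _ p (fun v : R => is_true (0 <= v <= 1))) => //; rewrite lexx ler01.
have Qn0 : forall k, 0 <= Qn k.
  by move=> k; apply: (@at_natP R _ PY (fun v : R => is_true (0 <= v))).
have S1 : \sum_(1 <= k < n'.+2) Qn k <= 1.
  have T : \sum_(0 <= k < n'.+3) Qn k = 1.
    rewrite big_mkord -PYsum; apply: eq_bigr => i _.
    by rewrite /Qn (at_natE _ PY _ (ltn_ord i)); congr PY; apply: val_inj.
  have -> : \sum_(1 <= k < n'.+2) Qn k = \sum_(0 <= k < n'.+3) Qn k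
     - \sum_(0 <= k < 1) Qn k - \sum_(n'.+2 <= k < n'.+3) Qn k.
    rewrite (@big_cat_nat _ _ _ 1%N 0%N n'.+3) // (@big_cat_nat _ _ _ n'.+2 1%N n'.+3) // /=; ring.
  rewrite T.
  have A0 : 0 <= \sum_(0 <= k < 1) Qn k by apply: sumr_ge0.
  have B0 : 0 <= \sum_(n'.+2 <= k < n'.+3) Qn k by apply: sumr_ge0.
  lra.
have S2 : \sum_(1 <= k < n'.+2) u k <= 4.
  rewrite /u (tele (fun k => psi (Pn k))) //.
  have := psi_bound _ (Pn01 n'.+2); have := psi_bound _ (Pn01 n'.+2.-1).
  have := psi_bound _ (Pn01 1%N); have := psi_bound _ (Pn01 0%N).
  move=> /andP[? ?] /andP[? ?] /andP[? ?] /andP[? ?]; lra.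
have [k [hk hx]] : exists k, (1 <= k < n'.+2)%N /\ m * Qn k + m / 2 * u k <= 3.
  case: (pselect (exists k, (1 <= k < n'.+2)%N /\ m * Qn k + m / 2 * u k <= 3)) => // H.
  exfalso.
  have H' : forall k, (1 <= k < n'.+2)%N -> (fun _ => 3) k < m * Qn k + m / 2 * u k.
    move=> k hk; rewrite ltNge; apply/negP => hle; by apply: H; exists k; split.
  have := @ltr_sum_nat R 1%N n'.+2 _ _ (isT : (1 < n'.+2)%N) H'.
  rewrite sumr_const_nat big_split /= -!mulr_sumr.
  have -> : 3 *+ (n'.+2 - 1) = 3 * m :> R by rewrite subn1 /= /m mulr_natr.
  have h1 : m * \sum_(1 <= i < n'.+2) Qn i <= m * 1 by rewrite ler_wpM2l // ltW.
  have h2 : m / 2 * \sum_(1 <= i < n'.+2) u i <= m / 2 * 4.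
    by rewrite ler_wpM2l // divr_ge0 // ltW.
  lra.
have k0 : (0 < k)%N by lia.
have hkk : (k < n'.+3)%N by lia.
have hk1 : (k.-1 < n'.+3)%N by lia.
have hkn : (k.+1 < n'.+3)%N by lia.
pose i := Ordinal hkk.
pose i1 := Ordinal hk1.
pose i2 := Ordinal hkn.
have h1 : val i1 = (val i).-1 by [].
have h2 : val i2 = (val i).+1 by [].
have hi : (0 < i < n'.+3.-1)%N by rewrite /=; lia.
exists i; split; first exact: hi.
have [hal01 hrel] := hal i hi.
rewrite (at_natE _ p _ hk1) (at_natE _ p _ hkn) in hrel.
rewrite (@diff_eq R n'.+3 PY p alpha i i1 i2 h1 h2 k0 PY0 p01 hal01 hrel).
have pa : p i1 <= p i by apply: pmono; rewrite /=; lia.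
have pb : p i <= p i2 by apply: pmono; rewrite /=; lia.
have [pa0 pa1] := andP (p01 i1).
have [pb0 pb1] := andP (p01 i2).
have [pi0 pi1] := andP (p01 i).
set J := alpha i * GG (p i1) + (1 - alpha i) * GG (p i2) - GG (p i).
have J1 : J <= 1 by apply: Jtriv.
have J2 : J <= 3 / 2 * (psi (p i2) - psi (p i1)) ^+ 2.
  by apply: Jbound => //; rewrite hrel.
have uk : u k = psi (p i2) - psi (p i1).
  by rewrite /u /Pn (at_natE _ p _ hkn) (at_natE _ p _ hk1).
have Qk : Qn k = PY i by rewrite /Qn (at_natE _ PY _ hkk).
rewrite uk Qk in hx.
have u0 : 0 <= psi (p i2) - psi (p i1).
  by rewrite subr_ge0; apply: psi_mono => //; apply: le_trans pb.
move: u0 hx J2; set U := psi (p i2) - psi (p i1) => u0 hx J2.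
have Q0 := PY0 i.
have XY : (m * PY i) * (m * U / 4) ^+ 2 <= 1.
  apply: amgm; [exact: mulr_ge0 (ltW mpos) Q0 | apply: divr_ge0 => //; exact: mulr_ge0 (ltW mpos) u0 |].
  have -> : m * PY i + 2 * (m * U / 4) = m * PY i + m / 2 * U by field.
  exact: hx.
have hmU : 0 <= m / 2 * U by apply: mulr_ge0 => //; apply: divr_ge0 => //; exact: ltW.
have QJ1 : PY i * J <= PY i by rewrite -[X in _ <= X]mulr1 ler_wpM2l.
have [n0|n1] := eqVneq n' 0%N.
  have hm1 : m = 1 by rewrite /m n0.
  rewrite hm1 in hx.
  rewrite n0 ler_pdivlMr; last by rewrite exprn_gt0 // ltr0n.
  have -> : ((0.+3)%:R : R) ^+ 3 = 27 by ring.
  lra.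
have m2 : 2 <= m by rewrite /m ler_nat ltnS lt0n.
have hN : (n'.+3)%:R = m + 2 :> R by rewrite /m -addn2 natrD.
rewrite hN ler_pdivlMr; last by rewrite exprn_gt0 //; lra.
set W := PY i * U ^+ 2.
have W0 : 0 <= W by apply: mulr_ge0 => //; apply: sqr_ge0.
have hW : m ^+ 3 * W <= 16.
  have -> : m ^+ 3 * W = 16 * ((m * PY i) * (m * U / 4) ^+ 2) by rewrite /W; field.
  lra.
have c := cube_ineq _ m2.
have e1 : PY i * J <= 3 / 2 * W.
  rewrite /W; apply: (le_trans (ler_wpM2l Q0 J2)).
  by apply: le_of_eq; ring.
have X0 : 0 <= (m + 2) ^+ 3 by apply: exprn_ge0; lra.
have e3 : PY i * J * (m + 2) ^+ 3 <= 3 / 2 * W * (m + 2) ^+ 3 by apply: ler_wpM2r.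
have e2 : W * (3 * (m + 2) ^+ 3) <= W * (32 * m ^+ 3) by apply: ler_wpM2l.
move: e2 e3 hW; set X := (m + 2) ^+ 3; set Y := m ^+ 3 => e2 e3 hW.
have e3' : PY i * J * X <= (W * (3 * X)) / 2.
  by move: e3; have -> : 3 / 2 * W * X = (W * (3 * X)) / 2 by field.
have e2' : W * (32 * Y) = 32 * (Y * W) by ring.
rewrite e2' in e2.
lra.
Qed.
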